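(* Consider the P-SSD algorithm described in the context, executed over a time-varying digraph $\{G_k=(\{1,\dots,M\},E_k)\}_{k=1}^\infty$ that is repeatedly jointly strongly connected, and let $C_{\mathrm{SSD}}=\mathrm{SSD}(D(X),D(Y))$. Then there exists $l\in\mathbb{N}$ such that for every iteration $k\ge l$, $C_k^i=C_l^i$ for all $i\in\{1,\dots,M\}$, and $$\mathcal{R}(C_l^1)=\mathcal{R}(C_l^2)=\cdots=\mathcal{R}(C_l^M)=\mathcal{R}(C_{\mathrm{SSD}}).$$
   Context: Data setting: a map $T:\mathcal{M}\to\mathcal{M}$, $\mathcal{M}\subseteq\mathbb{R}^n$; a dictionary $D(x)=[d_1(x),\dots,d_{N_d}(x)]$ of real-valued functions on $\mathcal{M}$; data matrices $X,Y\in\mathbb{R}^{N\times n}$ whose $i$-th rows $x_i^T,y_i^T$ satisfy $y_i=T(x_i)$; $D(X)\in\mathbb{R}^{N\times N_d}$ is the matrix with rows $D(x_1),\dots,D(x_N)$ (similarly $D(Y)$). Assumption: $D(X)$ and $D(Y)$ have full column rank. There are $M$ agents; agent $i$ holds local dictionary snapshots $D(X_i),D(Y_i)$ (obtained from a subset of the snapshot pairs) such that the union over $i$ of the rows of $[D(X_i),D(Y_i)]$ equals the set of rows of $[D(X),D(Y)]$. There are signature matrices $D(X_s),D(Y_s)$ with full column rank such that the rows of $[D(X_s),D(Y_s)]$ are contained in the rows of $[D(X_i),D(Y_i)]$ for every $i$. SSD algorithm: given $A,B\in\mathbb{R}^{m\times q}$, set $A_1=A$, $B_1=B$, $C=I_q$,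 and iterate: let $[Z^A_j;Z^B_j]$ be a matrix whose columns form a basis of the null space of $[A_j,B_j]$ (with $Z^A_j$ having as many rows as $A_j$ has columns); if the null space is trivial return $0$; if the number of rows of $Z^A_j$ is at most its number of columns, return $C$; otherwise set $C\leftarrow CZ^A_j$, $A_{j+1}=A_jZ^A_j$, $B_{j+1}=B_jZ^A_j$. Its output is denoted $\mathrm{SSD}(A,B)$. P-SSD algorithm: at iteration $k\ge1$ the digraph $G_k$ is used; an edge $(j,i)\in E_k$ means $j$ is an in-neighbor of $i$, and $\mathcal{N}_{\mathrm{in}}^k(i)$ denotes the in-neighbors of $i$ in $G_k$. Each agent $i$ sets $C_0^i=I_{N_d}$, $\mathrm{flag}_0^i=0$, and for $k=1,2,\dots$: receives $C_{k-1}^j$ for $j\in\mathcal{N}_{\mathrm{in}}^k(i)$; sets $D_k^i=\mathrm{basis}\big(\bigcap_{j\in\{i\}\cup\mathcal{N}_{\mathrm{in}}^k(i)}\mathcal{R}(C_{k-1}^j)\big)$; sets $E_k^i=\mathrm{SSD}(D(X_i)D_k^i,D(Y_i)D_k^i)$; if the number of columns of $D_k^iE_k^i$ is strictly less than that of $C_{k-1}^i$, sets $C_k^i=D_k^iE_k^i$ and $\mathrm{flag}_k^i=0$; otherwise sets $C_k^i=C_{k-1}^i$ and $\mathrm{flag}_k^i=1$; then transmits $C_k^i$ to its out-neighbors. Here $\mathrm{basis}(\mathcal{A})$ returns a matrix whose columns form a basis of the subspace $\mathcal{A}$, and returns $0$ if $\mathcal{A}=\{0\}$; the matrix $0$ is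 regarded as having $0$ columns. $\mathcal{R}(\cdot)$ denotes range space. Graph notions: the composition of digraphs $G_1=(V,E_1)$, $G_2=(V,E_2)$ is $G_2\circ G_1=(V,E_\circ)$ with $E_\circ=\{(i,j):\exists k\in V,\ (i,k)\in E_1,\ (k,j)\in E_2\}$. A finite sequence $G_1,\dots,G_k$ is jointly strongly connected if $G_k\circ\cdots\circ G_1$ is strongly connected (a directed path exists from every node to every other node). A sequence $\{G_i\}_{i=1}^\infty$ is repeatedly jointly strongly connected if there exist $l,\tau\in\mathbb{N}$ such that for every $k\in\mathbb{N}_0$ the sequence $\{G_{\tau+kl+j}\}_{j=0}^{l-1}$ is jointly strongly connected. *)

(* Defs.v *)
From HB Require Import structures.
From mathcomp Require Import all_boot all_order all_algebra.
From mathcomp Require Import reals.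
Set Implicit Arguments. Unset Strict Implicit. Unset Printing Implicit Defensive.
Import GRing.Theory Num.Theory.
Local Open Scope ring_scope.

Definition cmx (R : Type) (n : nat) := {c : nat & 'M[R]_(n, c)}.

Definition dict_mx (R : fieldType) (n Nd N : nat) (D : 'rV[R]_n -> 'rV[R]_Nd)
  (X : 'M[R]_(N, n)) : 'M[R]_(N, Nd) := \matrix_(r < N) D (row r X).

(* The columns of Z form a basis of the subspace of column vectors whose
   transposes span the row space of V (linearly independent + spanning). *)
Definition col_basis (R : fieldType) (m p s : nat) (Z : 'M[R]_(p, s))
  (V : 'M[R]_(m, p)) : bool := row_free Z^T && (Z^T == V)%MS.

Definition range_eq (R : fieldType) (n c1 c2 : nat) (C1 : 'M[R]_(n, c1))
  (C2 : 'M[R]_(n, c2)) : bool := (C1^T == C2^T)%MS.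

(* Possible runs of the SSD algorithm (for any choice of null-space bases).  The null space of [A_j, B_j]
   is the row space of kermx (row_mx A_j B_j)^T (as transposed column vectors).
   Z^A_j = usubmx Z (the first q rows). *)
Inductive ssd_from (R : fieldType) (m q0 : nat) :
  forall q : nat, 'M[R]_(q0, q) -> 'M[R]_(m, q) -> 'M[R]_(m, q) -> cmx R q0 -> Prop :=
| SSD_trivial q (C : 'M[R]_(q0, q)) A B (Z : 'M[R]_(q + q, 0)) :
    col_basis Z (kermx (row_mx A B)^T) ->
    ssd_from C A B (existT _ 0%N (0 : 'M[R]_(q0, 0)))
| SSD_stop q (C : 'M[R]_(q0, q)) A B s (Z : 'M[R]_(q + q, s)) :
    col_basis Z (kermx (row_mx A B)^T) -> (0 < s)%N -> (q <= s)%N ->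
    ssd_from C A B (existT _ q C)
| SSD_step q (C : 'M[R]_(q0, q)) A B s (Z : 'M[R]_(q + q, s)) res :
    col_basis Z (kermx (row_mx A B)^T) -> (0 < s)%N -> (s < q)%N ->
    ssd_from (C *m usubmx Z) (A *m usubmx Z) (B *m usubmx Z) res ->
    ssd_from C A B res.

Definition ssd (R : fieldType) (m q : nat) (A B : 'M[R]_(m, q)) (res : cmx R q) : Prop :=
  ssd_from (1%:M : 'M[R]_q) A B res.

(* Possible executions of P-SSD: C k i = C_k^i.  E k j i means (j,i) in E_k,
   i.e. j is an in-neighbor of i at iteration k (k >= 1). *)
Definition pssd_run (R : fieldType) (M Nd : nat) (Nloc : 'I_M -> nat)
  (DXl DYl : forall i : 'I_M, 'M[R]_(Nloc i, Nd)) (E : nat -> rel 'I_M)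
  (C : nat -> 'I_M -> cmx R Nd) : Prop :=
  (forall i, C 0%N i = existT _ Nd (1%:M : 'M[R]_Nd)) /\
  forall (k : nat) (i : 'I_M),
    exists (d : nat) (Dm : 'M[R]_(Nd, d)) (e : nat) (Em : 'M[R]_(d, e)),
      [/\ col_basis Dm (\bigcap_(j | (j == i) || E k.+1 j i) <<(projT2 (C k j))^T>>)%MS,
          ssd (DXl i *m Dm) (DYl i *m Dm) (existT _ e Em) &
          C k.+1 i = if (e < projT1 (C k i))%N then existT _ e (Dm *m Em) else C k i].

Definition rcomp (T : finType) (E1 E2 : rel T) : rel T :=
  fun x y => [exists z, E1 x z && E2 z y].

Fixpoint comp_seq (T : finType) (G : nat -> rel T) (a l : nat) : rel T :=
  match l with
  | 0 => fun x y => x == y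
  | l'.+1 => rcomp (comp_seq G a l') (G (a + l')%N)
  end.

Definition strongly_connected (T : finType) (r : rel T) : Prop :=
  forall x y, x != y -> connect r x y.

Definition jointly_sc (T : finType) (G : nat -> rel T) (a l : nat) : Prop :=
  strongly_connected (comp_seq G a l).

Definition rep_jointly_sc (T : finType) (G : nat -> rel T) : Prop :=
  exists l tau : nat, [/\ (0 < l)%N, (0 < tau)%N &
    forall k : nat, jointly_sc G (tau + k * l)%N l].

(* Main.v *)
Require Import Defs.
From HB Require Import structures.
From mathcomp Require Import all_boot all_order all_algebra.
From mathcomp Require Import reals.
Set Implicit Arguments. Unset Strict Implicit. Unset Printing Implicit Defensive.
Import GRing.Theory Num.Theory.
Local Open Scope ring_scope.

From Stdlib Require Classical.
Local Close Scope ring_scope.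

Lemma noninc_le (f : nat -> nat) : (forall k, f k.+1 <= f k) ->
  forall a b, a <= b -> f b <= f a.
Proof.
move=> h a b ab; rewrite -(subnK ab); elim: (b - a) => [|d IH] //=.
by rewrite addSn (leq_trans (h _) IH).
Qed.

Lemma ev_const (f : nat -> nat) : (forall k, f k.+1 <= f k) ->
  exists l, forall k, l <= k -> f k = f l.
Proof.
move=> h; suff: forall b (g : nat -> nat), g 0 <= b -> (forall k, g k.+1 <= g k) ->
    exists l, forall k, l <= k -> g k = g l by move/(_ (f 0) f (leqnn _) h).
elim=> [|b IH] g g0 hg.
  exists 0 => k _; apply/eqP; rewrite eqn_leq (noninc_le hg) //.
  by move: g0; rewrite leqn0 => /eqP ->.
case: (Classical_Prop.classic (forall k, g k = g 0)) => [hc|].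
  by exists 0 => k _; rewrite hc.
move/Classical_Pred_Type.not_all_ex_not => [k hk].
have lt : g k < g 0 by rewrite ltn_neqAle (noninc_le hg) // andbT; apply/eqP.
have h1 : g (k + 0) <= b by rewrite addn0 -ltnS (leq_trans lt g0).
have h2 : forall j, g (k + j.+1) <= g (k + j) by move=> j; rewrite addnS hg.
have [l hl] := IH (fun j => g (k + j)) h1 h2.
exists (k + l) => j kj.
have kj' : k <= j by apply: leq_trans kj; exact: leq_addr.
rewrite -(subnKC kj') (hl (j - k)) //.
by rewrite -(leq_add2l k) subnKC.
Qed.

Local Open Scope ring_scope.
Section LA.
Variable F : fieldType.

Definition symm m q0 p (A0 B0 : 'M[F]_(m,q0)) (W : 'M[F]_(q0,p)) :=
  ((A0 *m W)^T == (B0 *m W)^T)%MS.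

Lemma trfree m n (A : 'M[F]_(m,n)) : row_free A^T = row_full A.
Proof. by rewrite /row_free /row_full mxrank_tr. Qed.

Lemma fcr_mul m n p (A : 'M[F]_(m,n)) (B : 'M[F]_(n,p)) :
  row_full A -> row_full B -> row_full (A *m B).
Proof.
move=> fA fB; rewrite -trfree trmx_mul /row_free mxrankMfree ?trfree //.
by rewrite mxrank_tr.
Qed.

Lemma sub_eq_rank m1 m2 n (A : 'M[F]_(m1,n)) (B : 'M[F]_(m2,n)) :
  (A <= B)%MS -> (\rank B <= \rank A)%N -> (A == B)%MS.
Proof.
move=> sAB le; rewrite sAB /= -(mxrank_leqif_sup sAB).2 eqn_leq le.
by rewrite (mxrank_leqif_sup sAB).1.
Qed.

Lemma full_inj m n p (A : 'M[F]_(m,n)) (X : 'M[F]_(n,p)) :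
  row_full A -> A *m X = 0 -> X = 0.
Proof.
move=> fA AX; apply: trmx_inj; apply/eqP.
by rewrite trmx0 -(mulmx_free_eq0 _ (B:=A^T)) ?trfree // -trmx_mul AX trmx0.
Qed.

Lemma kerZ m q s (A B : 'M[F]_(m,q)) (Z : 'M[F]_(q + q, s)) :
  col_basis Z (kermx (row_mx A B)^T) -> A *m usubmx Z + B *m dsubmx Z = 0.
Proof.
case/andP=> _ /andP[sZ _].
move/sub_kermxP: sZ; rewrite -trmx_mul => /(congr1 trmx); rewrite trmxK trmx0.
by rewrite -{1}(vsubmxK Z) mul_row_col.
Qed.

Lemma colfree_ZA m q s (A B : 'M[F]_(m,q)) (Z : 'M[F]_(q + q, s)) :
  row_full B -> col_basis Z (kermx (row_mx A B)^T) -> row_full (usubmx Z).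
Proof.
move=> fB cb; have kZ := kerZ cb; case/andP: cb => fZ _.
rewrite -trfree; apply: inj_row_free => v vZ.
have uv : usubmx Z *m v^T = 0 by rewrite -[_ *m _]trmxK trmx_mul trmxK vZ trmx0.
have dv : dsubmx Z *m v^T = 0.
  apply: (full_inj fB); rewrite mulmxA.
  have -> : B *m dsubmx Z = - (A *m usubmx Z) by apply/eqP; rewrite -addr_eq0 addrC kZ.
  by rewrite mulNmx -mulmxA uv mulmx0 oppr0.
have : Z *m v^T = 0 by rewrite -(vsubmxK Z) mul_col_mx uv dv; apply/matrixP=> i j; rewrite !mxE; case: splitP => k _; rewrite mxE.
move/(congr1 trmx); rewrite trmx_mul trmxK trmx0 => /eqP.
by rewrite mulmx_free_eq0 // => /eqP.
Qed.


Lemma step_max m q0 q s p (A0 B0 : 'M[F]_(m,q0)) (C : 'M[F]_(q0,q))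
  (Z : 'M[F]_(q + q, s)) (W : 'M[F]_(q0,p)) :
  col_basis Z (kermx (row_mx (A0 *m C) (B0 *m C))^T) ->
  ((A0 *m W)^T <= (B0 *m W)^T)%MS -> (W^T <= C^T)%MS ->
  (W^T <= (C *m usubmx Z)^T)%MS.
Proof.
case/andP=> _ /andP[_ kZ] /submxP[P hP] /submxP[U' hU].
have hW : W = C *m U'^T by rewrite -[W]trmxK hU trmx_mul trmxK.
set U := U'^T in hW.
have hAU : A0 *m C *m U = B0 *m C *m U *m P^T.
  rewrite -(mulmxA A0) -(mulmxA B0) -hW -[A0 *m W]trmxK hP trmx_mul trmxK.
  by [].
set Y := col_mx U (- (U *m P^T)).
have hY : (Y^T <= kermx (row_mx (A0 *m C) (B0 *m C))^T)%MS.
  apply/sub_kermxP; rewrite -trmx_mul mul_row_col mulmxN hAU -mulmxA subrr.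
  by rewrite trmx0.
have /submxP[Q hQ] := submx_trans hY kZ.
have hU2 : U = usubmx Z *m Q^T.
  by rewrite -(col_mxKu U (- (U *m P^T))) -/Y -[Y]trmxK hQ trmx_mul trmxK mul_usub_mx.
by rewrite hW hU2 mulmxA trmx_mul submxMl.
Qed.

Lemma ssd_fromP m q0 (A0 B0 : 'M[F]_(m,q0)) : row_full A0 -> row_full B0 ->
  forall q (C : 'M[F]_(q0,q)) A B res, ssd_from C A B res ->
  A = A0 *m C -> B = B0 *m C -> row_full C ->
  [/\ ((projT2 res)^T <= C^T)%MS, row_full (projT2 res), symm A0 B0 (projT2 res) &
     forall p (W : 'M[F]_(q0,p)), symm A0 B0 W -> (W^T <= C^T)%MS ->
        (W^T <= (projT2 res)^T)%MS].
Proof.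
move=> fA0 fB0 q C A B res H; elim: H => {q C A B res}.
- move=> q C A B Z cb eA eB fC /=; split.
  + by rewrite trmx0 sub0mx.
  + by apply/eqP; rewrite mxrank0.
  + by rewrite /symm !mulmx0 !trmx0 submx_refl.
  + move=> p W /andP[sW _] sWC.
    rewrite eA eB in cb; have := step_max cb sW sWC.
    by rewrite (thinmx0 (C *m usubmx Z)) !trmx0.
- move=> q C A B s Z cb s0 qs eA eB fC /=; rewrite eA eB in cb; split => //.
  + have fZ := colfree_ZA (fcr_mul fB0 fC) cb.
    have sq : s = q.
      apply/eqP; rewrite eqn_leq qs andbT.
      by rewrite -(eqP fZ) rank_leq_row.
    subst s.
    have kZ := kerZ cb.
    have fZt : row_full (usubmx Z)^T.
      by rewrite /row_full mxrank_tr; exact: fZ.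
    apply: sub_eq_rank.
      rewrite -(eqmxMfull _ fZt) -trmx_mul.
      have -> : A0 *m C *m usubmx Z = - (B0 *m C *m dsubmx Z).
        by apply/eqP; rewrite -addr_eq0 kZ.
      by rewrite -mulmxN trmx_mul submxMl.
    by rewrite !mxrank_tr (eqP (fcr_mul fA0 fC)) (eqP (fcr_mul fB0 fC)).
- move=> q C A B s Z res cb s0 sq _ IH eA eB fC.
  have fB : row_full B by rewrite eB fcr_mul.
  have fZ := colfree_ZA fB cb.
  have e1 : A *m usubmx Z = A0 *m (C *m usubmx Z) by rewrite eA mulmxA.
  have e2 : B *m usubmx Z = B0 *m (C *m usubmx Z) by rewrite eB mulmxA.
  have [h1 h2 h3 h4] := IH e1 e2 (fcr_mul fC fZ).
  split => //.
  + by apply: submx_trans h1 _; rewrite trmx_mul submxMl.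
  + move=> p W sW sWC; apply: h4 => //.
    rewrite eA eB in cb; case/andP: sW => sW _.
    exact: step_max cb sW sWC.
Qed.


Lemma ssdP m q (A0 B0 : 'M[F]_(m,q)) res : ssd A0 B0 res ->
  row_full A0 -> row_full B0 ->
  [/\ row_full (projT2 res), symm A0 B0 (projT2 res) &
     forall p (W : 'M[F]_(q,p)), symm A0 B0 W -> (W^T <= (projT2 res)^T)%MS].
Proof.
move=> H fA fB.
have f1 : row_full (1%:M : 'M[F]_q) by apply/eqP; rewrite mxrank1.
have [_ h2 h3 h4] := ssd_fromP fA fB H (esym (mulmx1 A0)) (esym (mulmx1 B0)) f1.
by split => // p W sW; apply: h4 => //; rewrite trmx1 submx1.
Qed.

Lemma symm_restrict m m' q0 p (S : 'M[F]_(m',m)) (A0 B0 : 'M[F]_(m,q0)) (W : 'M[F]_(q0,p)) :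
  symm A0 B0 W -> symm (S *m A0) (S *m B0) W.
Proof.
case/andP=> h1 h2; rewrite /symm -!mulmxA !(trmx_mul S).
by rewrite !submxMr.
Qed.

Lemma symm_span m q0 p1 p2 (A0 B0 : 'M[F]_(m,q0)) (W1 : 'M[F]_(q0,p1)) (W2 : 'M[F]_(q0,p2)) :
  (W1^T == W2^T)%MS -> symm A0 B0 W1 = symm A0 B0 W2.
Proof.
move/eqmxP=> e; rewrite /symm !trmx_mul.
by rewrite (eqmxMr _ e) (eqmxMr _ e) (eqmxMr A0^T e) (eqmxMr B0^T e).
Qed.

Lemma global_sym M N Ns Nd p (Nloc : 'I_M -> nat) (AX BY : 'M[F]_(N,Nd))
  (DXl DYl : forall i : 'I_M, 'M[F]_(Nloc i, Nd)) (AXs BYs : 'M[F]_(Ns,Nd))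
  (V : 'M[F]_(Nd,p)) (i0 : 'I_M) :
  (forall i, exists S : 'M[F]_(Ns, Nloc i), AXs = S *m DXl i /\ BYs = S *m DYl i) ->
  (forall r' : 'I_N, exists i (r : 'I_(Nloc i)), row r (DXl i) = row r' AX /\ row r (DYl i) = row r' BY) ->
  row_full AX -> row_full BYs -> row_full V ->
  (forall i, symm (DXl i) (DYl i) V) -> symm AX BY V.
Proof.
move=> hsig hcov fAX fBs fV hs.
have : forall i, exists Q : 'M[F]_(p,p), DXl i *m V = DYl i *m V *m Q.
  move=> i; case/andP: (hs i) => /submxP[P hP] _; exists P^T.
  by rewrite -[DXl i *m V]trmxK hP trmx_mul trmxK.
case/fin_all_exists=> Q hQ.
have hQs : forall i, AXs *m V = BYs *m V *m Q i.
  move=> i; have [S [-> ->]] := hsig i.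
  by rewrite -!mulmxA hQ !mulmxA.
have fBV : row_full (BYs *m V) by rewrite fcr_mul.
have eQ : forall i, Q i = Q i0.
  move=> i; apply/eqP; rewrite -subr_eq0; apply/eqP; apply: (full_inj fBV).
  by rewrite mulmxBr -hQs -hQs subrr.
have hG : AX *m V = BY *m V *m Q i0.
  apply/row_matrixP => r'; have [i [r [h1 h2]]] := hcov r'.
  rewrite !row_mul -h1 -h2 -(eQ i) -!row_mul.
  by rewrite hQ.
apply: sub_eq_rank.
  by rewrite hG trmx_mul submxMl.
by rewrite !mxrank_tr (eqP (fcr_mul fAX fV)) rank_leq_col.
Qed.

End LA.

Section PSSD.
Variable F : fieldType.
Variables (M Nd : nat) (Nloc : 'I_M -> nat).
Variables (DXl DYl : forall i : 'I_M, 'M[F]_(Nloc i, Nd)).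
Variable E : nat -> rel 'I_M.
Variable C : nat -> 'I_M -> cmx F Nd.
Hypothesis fX : forall i, row_full (DXl i).
Hypothesis fY : forall i, row_full (DYl i).
Hypothesis run : pssd_run DXl DYl E C.

Lemma step_spec k i : exists d (Dm : 'M[F]_(Nd,d)) e (Em : 'M[F]_(d,e)),
  [/\ (Dm^T == \bigcap_(j | (j == i) || E k.+1 j i) <<(projT2 (C k j))^T>>)%MS,
      row_full (Dm *m Em), symm (DXl i) (DYl i) (Dm *m Em),
      (forall p (W : 'M[F]_(Nd,p)), symm (DXl i) (DYl i) W -> (W^T <= Dm^T)%MS ->
          (W^T <= (Dm *m Em)^T)%MS) &
      C k.+1 i = if (e < projT1 (C k i))%N then existT _ e (Dm *m Em) else C k i].
Proof.
have [_ H] := run; have [d [Dm [e [Em [cb hs hC]]]]] := H k i.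
case/andP: cb => fD eD.
rewrite trfree in fD.
have [f1 s1 m1] := ssdP hs (fcr_mul (fX i) fD) (fcr_mul (fY i) fD).
exists d, Dm, e, Em; split => //.
- exact: fcr_mul.
- by rewrite /symm !mulmxA.
- move=> p W sW /submxP[P hP].
  have hW : W = Dm *m P^T by rewrite -[W]trmxK hP trmx_mul trmxK.
  have : symm (DXl i *m Dm) (DYl i *m Dm) P^T by rewrite /symm -!mulmxA -hW.
  move/m1; rewrite trmxK => sP.
  by rewrite hP trmx_mul submxMr.
Qed.

Lemma fcrC k i : row_full (projT2 (C k i)).
Proof.
elim: k i => [|k IH] i.
  by have [-> _] := run; apply/eqP; rewrite mxrank1.
have [d [Dm [e [Em [_ f _ _ ->]]]]] := step_spec k i.
by case: ifP.
Qed.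

Lemma span_step k i : exists d (Dm : 'M[F]_(Nd,d)) e (Em : 'M[F]_(d,e)),
  [/\ (Dm^T == \bigcap_(j | (j == i) || E k.+1 j i) <<(projT2 (C k j))^T>>)%MS,
      ((projT2 (C k.+1 i))^T == (Dm *m Em)^T)%MS, symm (DXl i) (DYl i) (Dm *m Em),
      (forall p (W : 'M[F]_(Nd,p)), symm (DXl i) (DYl i) W -> (W^T <= Dm^T)%MS ->
          (W^T <= (Dm *m Em)^T)%MS) &
      (projT1 (C k.+1 i) <= projT1 (C k i))%N /\
      (C k.+1 i = C k i \/ (projT1 (C k.+1 i) < projT1 (C k i))%N)].
Proof.
have [d [Dm [e [Em [eD f s m hC]]]]] := step_spec k i.
exists d, Dm, e, Em; split => //; rewrite hC; case: ifP => //= lt.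
- by rewrite submx_refl.
- have sub : ((Dm *m Em)^T <= (projT2 (C k i))^T)%MS.
    rewrite trmx_mul; apply: submx_trans (submxMl _ _) _.
    case/andP: eD => e1 _; apply: submx_trans e1 _.
    apply: (bigcapmx_inf i); first by rewrite eqxx.
    by rewrite genmxE.
  rewrite andbC; apply: sub_eq_rank => //.
  rewrite !mxrank_tr (eqP f) (eqP (fcrC k i)).
  by rewrite leqNgt lt.
- by split => //; [apply: ltnW | right].
- by split => //; left.
Qed.

Lemma contains_sym p (W : 'M[F]_(Nd,p)) :
  (forall i, symm (DXl i) (DYl i) W) -> forall k i, (W^T <= (projT2 (C k i))^T)%MS.
Proof.
move=> hs; elim=> [|k IH] i.
  by have [-> _] := run; rewrite trmx1 submx1.
have [d [Dm [e [Em [eD eC s m _]]]]] := span_step k i.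
case/andP: eC => _ eC; apply: submx_trans eC.
apply: m => //; case/andP: eD => _ eD; apply: submx_trans eD.
by apply/sub_bigcapmxP => j _; rewrite genmxE.
Qed.

Lemma stabilize : exists l, forall k, (l <= k)%N -> forall i, C k i = C l i.
Proof.
have : forall i, exists L, forall k, (L <= k)%N -> projT1 (C k i) = projT1 (C L i).
  move=> i; apply: ev_const => k.
  by have [d [Dm [e [Em [_ _ _ _ [h _]]]]]] := span_step k i.
case/fin_all_exists => L hL.
exists (\max_i L i) => k lk i.
have eq1 : forall k, (\max_i L i <= k)%N -> projT1 (C k i) = projT1 (C (\max_i L i) i).
  move=> k' lk'; rewrite hL; last by apply: leq_trans lk'; exact: leq_bigmax.
  by rewrite hL // leq_bigmax.
rewrite -(subnKC lk); elim: (k - \max_i L i)%N => [|d IH]; first by rewrite addn0.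
rewrite addnS; have [d' [Dm [e [Em [_ _ _ _ [_ [h|h]]]]]]] := span_step (\max_i L i + d) i.
  by rewrite h.
move: h; rewrite eq1 ?eq1 ?ltnn //.
  by rewrite leq_addr.
by rewrite -addnS leq_addr.
Qed.

Lemma edge_incl l : (forall k, (l <= k)%N -> forall i, C k i = C l i) ->
  forall a j i, (l < a)%N -> E a j i ->
  ((projT2 (C l i))^T <= (projT2 (C l j))^T)%MS.
Proof.
move=> st [|k] // j i; rewrite ltnS => lk hE.
have [d [Dm [e [Em [eD eC _ _ _]]]]] := span_step k i.
rewrite -(st k.+1 (leqW lk) i) -(st k lk j).
case/andP: eC => eC _; apply: submx_trans eC _.
rewrite trmx_mul; apply: submx_trans (submxMl _ _) _.
case/andP: eD => eD _; apply: submx_trans eD _.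
apply: (bigcapmx_inf j); first by rewrite hE orbT.
by rewrite genmxE.
Qed.

Lemma comp_incl l : (forall k, (l <= k)%N -> forall i, C k i = C l i) ->
  forall L a x y, (l < a)%N -> comp_seq E a L x y ->
  ((projT2 (C l y))^T <= (projT2 (C l x))^T)%MS.
Proof.
move=> st; elim=> [|L IH] a x y la /=.
  by move/eqP->; rewrite submx_refl.
case/existsP=> z /andP[h1 h2].
apply: submx_trans (IH a x z la h1).
apply: (edge_incl st _ h2).
by apply: leq_trans la _; rewrite leq_addr.
Qed.

End PSSD.

Lemma connect_incl (T : finType) (r : rel T) (P : T -> T -> Prop) :
  (forall x, P x x) -> (forall x y z, P x y -> P y z -> P x z) ->
  (forall x y, r x y -> P x y) -> forall x y, connect r x y -> P x y.
Proof.
move=> refl tr hr x y /connectP[p hp ->]; elim: p x hp => [|z p IH] x //=.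
by case/andP=> h1 h2; apply: tr (hr _ _ h1) (IH _ h2).
Qed.

Theorem theorem6p1 (R : realType) (n Nd N M : nat)
  (T : 'rV[R]_n -> 'rV[R]_n) (D : 'rV[R]_n -> 'rV[R]_Nd)
  (X Y : 'M[R]_(N, n))
  (Nloc : 'I_M -> nat) (Xl Yl : forall i : 'I_M, 'M[R]_(Nloc i, n))
  (Ns : nat) (Xs Ys : 'M[R]_(Ns, n))
  (E : nat -> rel 'I_M) (C : nat -> 'I_M -> cmx R Nd) :
  (forall r : 'I_N, row r Y = T (row r X)) ->
  row_full (dict_mx D X) -> row_full (dict_mx D Y) ->
  (forall (i : 'I_M) (r : 'I_(Nloc i)), exists r' : 'I_N,
      row r (Xl i) = row r' X /\ row r (Yl i) = row r' Y) ->
  (forall r' : 'I_N, exists (i : 'I_M) (r : 'I_(Nloc i)),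
      row r (row_mx (dict_mx D (Xl i)) (dict_mx D (Yl i)))
      = row r' (row_mx (dict_mx D X) (dict_mx D Y))) ->
  row_full (dict_mx D Xs) -> row_full (dict_mx D Ys) ->
  (forall (i : 'I_M) (r : 'I_Ns), exists r' : 'I_(Nloc i),
      row r (row_mx (dict_mx D Xs) (dict_mx D Ys))
      = row r' (row_mx (dict_mx D (Xl i)) (dict_mx D (Yl i)))) ->
  rep_jointly_sc E ->
  pssd_run (fun i => dict_mx D (Xl i)) (fun i => dict_mx D (Yl i)) E C ->
  exists l : nat,
    (forall k : nat, (l <= k)%N -> forall i : 'I_M, C k i = C l i) /\
    (forall Cssd : cmx R Nd, ssd (dict_mx D X) (dict_mx D Y) Cssd ->
       forall i : 'I_M, range_eq (projT2 (C l i)) (projT2 Cssd)).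
Proof.
move=> _ fAX fBY hloc hcov fXs fYs hsig hrep hrun.
set AX := dict_mx D X in fAX hcov *; set BY := dict_mx D Y in fBY hcov *.
set AXs := dict_mx D Xs in fXs hsig *; set BYs := dict_mx D Ys in fYs hsig *.
set DXl := fun i => dict_mx D (Xl i); set DYl := fun i => dict_mx D (Yl i).
have rowD : forall m (Z : 'M[R]_(m, n)) r, row r (dict_mx D Z) = D (row r Z).
  by move=> m Z r; rewrite /dict_mx rowK.
have hsig' : forall i, exists S : 'M[R]_(Ns, Nloc i), AXs = S *m DXl i /\ BYs = S *m DYl i.
  move=> i; have /fin_all_exists[f hf] := hsig i.
  exists (rowsub f 1%:M).
  have : row_mx AXs BYs = row_mx (rowsub f 1%:M *m DXl i) (rowsub f 1%:M *m DYl i).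
    rewrite -mul_mx_row -rowsubE; apply/row_matrixP => r.
    by rewrite row_rowsub hf.
  by case/eq_row_mx.
have fX : forall i, row_full (DXl i).
  move=> i; have [S [hS _]] := hsig' i.
  rewrite /row_full eqn_leq rank_leq_col /=.
  by rewrite -{1}(eqP fXs) hS mxrankM_maxr.
have fY : forall i, row_full (DYl i).
  move=> i; have [S [_ hS]] := hsig' i.
  rewrite /row_full eqn_leq rank_leq_col /=.
  by rewrite -{1}(eqP fYs) hS mxrankM_maxr.
have hcov' : forall r' : 'I_N, exists i (r : 'I_(Nloc i)),
    row r (DXl i) = row r' AX /\ row r (DYl i) = row r' BY.
  move=> r'; have [i [r h]] := hcov r'; exists i, r.
  by move: h; rewrite !row_row_mx => /eq_row_mx.
have hloc' : forall i p (W : 'M[R]_(Nd, p)), symm AX BY W -> symm (DXl i) (DYl i) W.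
  move=> i p W sW; have /fin_all_exists[g hg] := hloc i.
  have -> : DXl i = rowsub g 1%:M *m AX.
    rewrite -rowsubE; apply/row_matrixP => r.
    by rewrite row_rowsub !rowD (proj1 (hg r)).
  have -> : DYl i = rowsub g 1%:M *m BY.
    rewrite -rowsubE; apply/row_matrixP => r.
    by rewrite row_rowsub !rowD (proj2 (hg r)).
  exact: symm_restrict.
have [l st] := stabilize fX fY hrun.
exists l; split => // Cssd hssd i.
have [fS symS maxS] := ssdP hssd fAX fBY.
have sub1 := contains_sym fX fY hrun (fun j => hloc' j _ _ symS) l.
have [Lw [tau [Lw0 tau0 hw]]] := hrep.
have allinc : forall x y, ((projT2 (C l y))^T <= (projT2 (C l x))^T)%MS.
  move=> x y; have := hw l; rewrite /jointly_sc /strongly_connected => sc.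
  have la : (l < tau + l * Lw)%N.
    apply: (@leq_trans (tau + l)); first by rewrite addnC -{1}(addn0 l) ltn_add2l.
    by rewrite leq_add2l leq_pmulr.
  case: (eqVneq x y) => [->|nxy]; first exact: submx_refl.
  apply: (connect_incl (P := fun x y => ((projT2 (C l y))^T <= (projT2 (C l x))^T)%MS)) (sc _ _ nxy).
  - by move=> z; exact: submx_refl.
  - by move=> u v w h1 h2; exact: submx_trans h2 h1.
  - by move=> u v h; exact: (comp_incl fX fY hrun st la h).
have symj : forall j, symm (DXl j) (DYl j) (projT2 (C l i)).
  move=> j; have [d [Dm [e [Em [_ eC sE _ _]]]]] := span_step fX fY hrun l j.
  rewrite (st l.+1 (leqnSn l) j) in eC.
  rewrite -(symm_span _ _ eC) in sE.
  have eij : ((projT2 (C l j))^T == (projT2 (C l i))^T)%MS by rewrite !allinc.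
  by rewrite -(symm_span _ _ eij).
have sG := global_sym i hsig' hcov' fAX fYs (fcrC fX fY hrun l i) symj.
by rewrite /range_eq maxS // sub1.
Qed.
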